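(* If $\tau$ is a tau function of the Pfaff–Toda hierarchy, then $$\tfrac12D_{t_1}D_{\bar t_1}\tau(s,r)\cdot\tau(s,r)+\tau(s-1,r)\tau(s+1,r)-\tau(s,r-1)\tau(s,r+1)=0$$ and $$D_{t_1}\tau(s,r)\cdot\tau(s+1,r-1)+D_{\bar t_1}\tau(s,r-1)\cdot\tau(s+1,r)=0.$$
   Context: Let $\boldsymbol t=(t_1,t_2,\dots)$, $\bar{\boldsymbol t}=(\bar t_1,\bar t_2,\dots)$ be infinite sequences of continuous variables and $s,r\in\mathbb Z$. Put $[z]=(z,z^2/2,z^3/3,\dots)$, $\xi(\boldsymbol t,z)=\sum_{k\ge1}t_kz^k$. For a formal Laurent series $f(z)=\sum_na_nz^n$ write $\oint\frac{dz}{2\pi i}f(z)=a_{-1}$. A tau function of the Pfaff–Toda hierarchy is a nowhere vanishing function $\tau(s,r,\boldsymbol t,\bar{\boldsymbol t})$ such that for all $(s,r,\boldsymbol t,\bar{\boldsymbol t})$, $(s',r',\boldsymbol t',\bar{\boldsymbol t}')$: $$\oint\frac{dz}{2\pi i}z^{s'+r'-s-r}e^{\xi(\boldsymbol t'-\boldsymbol t,z)}\tau(s',r',\boldsymbol t'-[z^{-1}],\bar{\boldsymbol t}')\tau(s,r,\boldsymbol t+[z^{-1}],\bar{\boldsymbol t})+\oint\frac{dz}{2\pi i}z^{s+r-s'-r'-4}e^{\xi(\boldsymbol t-\boldsymbol t',z)}\tau(s'+1,r'+1,\boldsymbol t'+[z^{-1}],\bar{\boldsymbol t}')\tau(s-1,r-1,\boldsymbol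 t-[z^{-1}],\bar{\boldsymbol t})$$ $$=\oint\frac{dz}{2\pi i}z^{s'-r'-s+r}e^{\xi(\bar{\boldsymbol t}'-\bar{\boldsymbol t},z^{-1})}\tau(s'+1,r',\boldsymbol t',\bar{\boldsymbol t}'-[z])\tau(s-1,r,\boldsymbol t,\bar{\boldsymbol t}+[z])+\oint\frac{dz}{2\pi i}z^{s-r-s'+r'}e^{\xi(\bar{\boldsymbol t}-\bar{\boldsymbol t}',z^{-1})}\tau(s',r'+1,\boldsymbol t',\bar{\boldsymbol t}'+[z])\tau(s,r-1,\boldsymbol t,\bar{\boldsymbol t}-[z]),$$ where the two left-hand integrands are expanded at $z=\infty$ and the two right-hand ones at $z=0$. Abbreviate $\tau(s,r)=\tau(s,r,\boldsymbol t,\bar{\boldsymbol t})$. Hirota's bilinear derivative: $D_xf\cdot g=(\partial_xf)g-f\,\partial_xg$, and $D_xD_yf\cdot g=\partial_u\partial_v\big(f(x+u,y+v)g(x-u,y-v)\big)|_{u=v=0}$. *)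

(* Defs.v *)
(* Tau functions are modelled as FORMAL power series in the
   variables t = (t_1,t_2,...) and tbar = (tbar_1,tbar_2,...) over a
   characteristic-zero field K (numFieldType). *)
From HB Require Import structures.
From mathcomp Require Import all_boot all_order all_algebra.
Set Implicit Arguments. Unset Strict Implicit. Unset Printing Implicit Defensive.
Import Order.TTheory GRing.Theory Num.Theory.
Local Open Scope ring_scope.

(* A monomial in t_1,t_2,...: the exponent of t_{i+1} is [nth 0 m i]
   (trailing zeros are irrelevant). *)
Definition mono := seq nat.

(* A formal power series in (t, tbar): coefficient of t^a tbar^c is [f a c]. *)
Definition ps (K : Type) := mono -> mono -> K.

Definition addm (a b : mono) : mono :=
  mkseq (fun i => (nth 0 a i + nth 0 b i)%N) (maxn (size a) (size b)).
Definition subm (a b : mono) : mono :=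
  mkseq (fun i => (nth 0 a i - nth 0 b i)%N) (size a).

Fixpoint box (a : mono) : seq mono :=
  match a with
  | [::] => [:: [::]]
  | x :: a' => [seq i :: b | i <- iota 0 x.+1, b <- box a']
  end.

Definition wt (a : mono) : nat := (\sum_(i < size a) (i.+1 * nth 0 a i))%N.

Definition wts (n : nat) : seq mono := [seq b <- box (nseq n n) | wt b == n].

(* tau(s,r,t,tbar) as a formal series, from its coefficient function
   T s r alpha alphabar = coefficient of t^alpha tbar^alphabar *)
Definition tps (K : Type) (T : int -> int -> (nat -> nat) -> (nat -> nat) -> K)
  (s r : int) : ps K := fun a c => T s r (nth 0 a) (nth 0 c).

Section Ops.
Variable K : numFieldType.

Definition mulps (f g : ps K) : ps K := fun a c =>
  \sum_(a1 <- box a) \sum_(c1 <- box c) f a1 c1 * g (subm a a1) (subm c c1).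

Definition dT1 (f : ps K) : ps K := fun a c =>
  (nth 0 a 0).+1%:R * f (incr_nth a 0) c.
Definition dTb1 (f : ps K) : ps K := fun a c =>
  (nth 0 c 0).+1%:R * f a (incr_nth c 0).

(* Hirota derivatives:  D_x f.g = f_x g - f g_x ;
   D_x D_y f.g = d_u d_v (f(x+u,y+v) g(x-u,y-v))|_{u=v=0}
               = f_xy g - f_x g_y - f_y g_x + f g_xy *)
Definition hirota1 (D : ps K -> ps K) (f g : ps K) : ps K := fun a c =>
  mulps (D f) g a c - mulps f (D g) a c.
Definition hirota2 (D1 D2 : ps K -> ps K) (f g : ps K) : ps K := fun a c =>
  mulps (D1 (D2 f)) g a c - mulps (D1 f) (D2 g) a c
  - mulps (D2 f) (D1 g) a c + mulps f (D1 (D2 g)) a c.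

(* coefficient of u^b t^a in F(t+u) (per unit coefficient), where
   u = eps [w], i.e. u_{i+1} = eps w^{i+1}/(i+1), w-power omitted *)
Definition shiftc (eps : K) (a b : mono) : K :=
  \prod_(i < size b)
     ('C(nth 0 a i + nth 0 b i, nth 0 b i)%:R * (eps / (i.+1)%:R) ^+ nth 0 b i).

(* coefficient of w^n t^a tbar^c in F(t + eps[w], tbar) *)
Definition shT (F : ps K) (eps : K) (n : nat) (a c : mono) : K :=
  \sum_(b <- wts n) F (addm a b) c * shiftc eps a b.
(* coefficient of w^n t^a tbar^c in F(t, tbar + eps[w]) *)
Definition shTb (F : ps K) (eps : K) (n : nat) (a c : mono) : K :=
  \sum_(b <- wts n) F a (addm c b) * shiftc eps c b.

(* coefficient of x^a1 x'^b1 in exp(xi(sig (x'-x), w)), w-power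
   (of weighted degree wt a1 + wt b1) omitted *)
Definition expc (sig : K) (a1 b1 : mono) : K :=
  (\prod_(i < size a1) ((- sig) ^+ nth 0 a1 i / (nth 0 a1 i)`!%:R))
  * (\prod_(i < size b1) (sig ^+ nth 0 b1 i / (nth 0 b1 i)`!%:R)).

Definition resid (N : int) (f g : nat -> K) : K :=
  match N with
  | Posz n => \sum_(k < n.+1) f k * g (n - k)%N
  | Negz _ => 0
  end.

(* Coefficient of t^a t'^b tbar^c tbar'^d in
   oint dz/2pi i  z^m e^{xi(sig(t'-t),z)} F(t' - sig[z^-1], tbar') G(t + sig[z^-1], tbar)
   (integrand expanded at z = infinity) *)
Definition lhsTerm (m : int) (sig : K) (F G : ps K) (a b c d : mono) : K :=
  \sum_(a1 <- box a) \sum_(b1 <- box b)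
    expc sig a1 b1 *
    resid (m + (wt a1 + wt b1)%N%:Z + 1)
      (fun k => shT F (- sig) k (subm b b1) d)
      (fun l => shT G sig l (subm a a1) c).

(* Coefficient of t^a t'^b tbar^c tbar'^d in
   oint dz/2pi i  z^p e^{xi(sig(tbar'-tbar),z^-1)} F(t', tbar' - sig[z]) G(t, tbar + sig[z])
   (integrand expanded at z = 0) *)
Definition rhsTerm (p : int) (sig : K) (F G : ps K) (a b c d : mono) : K :=
  \sum_(c1 <- box c) \sum_(d1 <- box d)
    expc sig c1 d1 *
    resid ((wt c1 + wt d1)%N%:Z - p - 1)
      (fun k => shTb F (- sig) k b (subm d d1))
      (fun l => shTb G sig l a (subm c c1)).

End Ops.

(* The Pfaff-Toda bilinear identity, as an identity of formal series in
   (t, t', tbar, tbar'), coefficient of t^a t'^b tbar^c tbar'^d. *)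
Definition PT_bilinear (K : numFieldType)
  (T : int -> int -> (nat -> nat) -> (nat -> nat) -> K) : Prop :=
  forall (s r s' r' : int) (a b c d : mono),
    lhsTerm (s' + r' - s - r) 1 (tps T s' r') (tps T s r) a b c d
    + lhsTerm (s + r - s' - r' - 4) (-1) (tps T (s' + 1) (r' + 1)) (tps T (s - 1) (r - 1)) a b c d
    = rhsTerm (s' - r' - s + r) 1 (tps T (s' + 1) r') (tps T (s - 1) r) a b c d
    + rhsTerm (s - r - s' + r') (-1) (tps T s' (r' + 1)) (tps T s (r - 1)) a b c d.

(* tau function of the Pfaff-Toda hierarchy: nonvanishing (constant term
   nonzero, the formal analogue) and the bilinear identity. *)
Definition PT_tau (K : numFieldType)
  (T : int -> int -> (nat -> nat) -> (nat -> nat) -> K) : Prop :=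
  (forall s r : int, T s r (fun _ => 0%N) (fun _ => 0%N) != 0) /\ PT_bilinear T.

(* Main.v *)
Require Import Defs.
From HB Require Import structures.
From mathcomp Require Import all_boot all_order all_algebra.
From Stdlib Require Import FunctionalExtensionality.
Import Order.TTheory GRing.Theory Num.Theory.
Local Open Scope ring_scope.

Lemma mkseqSl (f : nat -> nat) n : mkseq f n.+1 = f 0%N :: mkseq (fun i => f i.+1) n.
Proof.
apply: (@eq_from_nth _ 0%N); first by rewrite size_mkseq /= size_mkseq.
move=> i; rewrite size_mkseq => Hi; rewrite nth_mkseq //.
case: i Hi => [|i] Hi //=; rewrite nth_mkseq //.
Qed.

Lemma subm_cons x a i b : subm (x :: a) (i :: b) = (x - i)%N :: subm a b.
Proof. by rewrite /subm /= mkseqSl. Qed.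

Lemma addm_cons x a i b : addm (x :: a) (i :: b) = (x + i)%N :: addm a b.
Proof. by rewrite /addm /= maxnSS mkseqSl. Qed.

Lemma subm_nil : subm [::] [::] = [::].
Proof. by []. Qed.

Lemma addm_nil_r a : addm a [::] = a.
Proof.
rewrite /addm maxn0 -[RHS](mkseq_nth 0%N); apply: eq_mkseq => i.
by rewrite nth_nil addn0.
Qed.

Lemma addm_incr a : addm a [:: 1%N] = incr_nth a 0.
Proof.
case: a => [|x a] //; rewrite /addm /= maxnSS maxn0 mkseqSl /= addn1; congr (_ :: _).
rewrite -[RHS](mkseq_nth 0%N); apply: eq_mkseq => i; by rewrite /= nth_nil addn0.
Qed.

Lemma box_nil : box [::] = [:: [::]].
Proof. by []. Qed.

Lemma sum_iota (K : numFieldType) n (F : nat -> K) :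
  \sum_(i <- iota 0 n) F i = \sum_(i < n) F i.
Proof. by rewrite -(big_mkord xpredT) /index_iota subn0. Qed.

Lemma big_box_cons (K : numFieldType) x a (F : mono -> K) :
  \sum_(b <- box (x :: a)) F b = \sum_(i < x.+1) \sum_(b <- box a) F ((i : nat) :: b).
Proof.
have -> : box (x :: a) = [seq i :: b | i <- iota 0 x.+1, b <- box a] by [].
by rewrite big_allpairs_dep sum_iota.
Qed.

Lemma wt_nil : wt [::] = 0%N.
Proof. by rewrite /wt big_ord0. Qed.

Lemma wt_cons x a : wt (x :: a) = (x + wt a + \sum_(i < size a) nth 0%N a i)%N.
Proof.
rewrite /wt /= big_ord_recl /= mul1n -addnA; congr (_ + _)%N.
rewrite -big_split /=; apply: eq_bigr => i _.
by rewrite /bump /= mulSn addnC.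
Qed.

Lemma wt_pad a n : (size a <= n)%N -> wt a = (\sum_(i < n) i.+1 * nth 0 a i)%N.
Proof.
move=> Hn; rewrite /wt (big_ord_widen n (fun i => i.+1 * nth 0 a i)%N Hn).
rewrite big_mkcond /=; apply: eq_bigr => i _.
by case: ifP => // /negbT; rewrite -leqNgt => H; rewrite nth_default // muln0.
Qed.

Lemma wt_addm a b : wt (addm a b) = (wt a + wt b)%N.
Proof.
set n := maxn (size a) (size b).
rewrite (@wt_pad (addm a b) n); last by rewrite size_mkseq.
rewrite (@wt_pad a n) ?leq_maxl // (@wt_pad b n) ?leq_maxr // -big_split /=.
by apply: eq_bigr => i _; rewrite nth_mkseq // mulnDr.
Qed.

Lemma wt_zeros n : wt (nseq n 0%N) = 0%N.
Proof. by rewrite /wt big1 // => i _; rewrite nth_nseq if_same muln0. Qed.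

Lemma wt_unit n : wt (1%N :: nseq n 0%N) = 1%N.
Proof. by rewrite wt_cons wt_zeros big1 // => i _; rewrite nth_nseq if_same. Qed.

Lemma wts0 : wts 0 = [:: [::]].
Proof. by rewrite /wts /= wt_nil. Qed.

Lemma wt1 i : wt [:: i] = i.
Proof. by rewrite wt_cons wt_nil big_ord0 !addn0. Qed.

Lemma wts1 : wts 1 = [:: [:: 1%N]].
Proof. by rewrite /wts /= !wt1. Qed.

Lemma tri2 (K : numFieldType) N (F : nat -> nat -> K) :
  \sum_(j < N.+1) \sum_(k < j.+1) F k (j - k)%N
  = \sum_(k < N.+1) \sum_(q < (N - k).+1) F k q.
Proof.
elim: N => [|N IH]; first by rewrite !big_ord1.
rewrite (big_ord_recr N.+1) /= IH.
rewrite [RHS](big_ord_recr N.+1) /= subnn big_ord1.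
rewrite (big_ord_recr N.+1 (fun k => F _ _)) /= subnn addrA; congr (_ + _).
rewrite -big_split /=; apply: eq_bigr => k _.
have Hk : (k <= N)%N by rewrite -ltnS.
by rewrite subSn // [RHS]big_ord_recr.
Qed.

Lemma rev2 (K : numFieldType) j (R : nat -> nat -> K) :
  \sum_(k < j.+1) R k (j - k)%N = \sum_(q < j.+1) R (j - q)%N q.
Proof.
rewrite (reindex_inj rev_ord_inj) /=; apply: eq_bigr => k _.
by rewrite subSS subKn // -ltnS.
Qed.

Lemma trisym (K : numFieldType) N (R : nat -> nat -> K) :
  \sum_(k < N.+1) \sum_(q < (N - k).+1) R k q
  = \sum_(q < N.+1) \sum_(k < (N - q).+1) R k q.
Proof.
rewrite -tri2 -(@tri2 K N (fun q k => R k q)); apply: eq_bigr => j _.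
exact: rev2.
Qed.

Lemma tri3 (K : numFieldType) N (h : nat -> nat -> nat -> nat -> K) :
  \sum_(j < N.+1) \sum_(i < (N - j).+1) \sum_(k < j.+1) h i k (j - k)%N (N - j - i)%N
  = \sum_(q < N.+1) \sum_(n < (N - q).+1) \sum_(k < n.+1) h (n - k)%N k q (N - q - n)%N.
Proof.
pose P k q := \sum_(i < (N - (k + q)).+1) h i k q (N - (k + q) - i)%N.
transitivity (\sum_(j < N.+1) \sum_(k < j.+1) P k (j - k)%N).
  apply: eq_bigr => j _; rewrite exchange_big /=; apply: eq_bigr => k _.
  by rewrite /P subnKC // -ltnS.
rewrite tri2 trisym; apply: eq_bigr => q _.
transitivity (\sum_(n < (N - q).+1) \sum_(k < n.+1)
   (fun k i => h i k q (N - q - (k + i))%N) k (n - k)%N); last first.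
  apply: eq_bigr => n _; apply: eq_bigr => k _ /=.
  by rewrite subnKC // -ltnS.
rewrite (@tri2 K (N - q) (fun k i => h i k q (N - q - (k + i))%N)); apply: eq_bigr => k _ /=.
rewrite /P; have -> : (N - (k + q) = N - q - k)%N by rewrite addnC subnDA.
by apply: eq_bigr => i _; rewrite !subnDA.
Qed.

Definition cf (K : numFieldType) (sg : K) (i : nat) : K := (- sg) ^+ i / (i`!)%:R.
Definition df (K : numFieldType) (sg : K) (i : nat) : K := sg ^+ i / (i`!)%:R.
Arguments cf {K}.
Arguments df {K}.

Lemma fact_neq0 (K : numFieldType) n : (n`!)%:R != 0 :> K.
Proof. by rewrite pnatr_eq0 -lt0n fact_gt0. Qed.

Lemma aux (R : fieldType) (X Y a b c : R) : a != 0 ->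
  X * c^-1 * (Y * b^-1) = a^-1 * (b^-1 * c^-1) * (X * Y * a).
Proof.
move=> Ha.
rewrite [X * Y * a]mulrC [a^-1 * _]mulrC -[RHS]mulrA mulKf //.
by rewrite mulrACA mulrC (mulrC b^-1).
Qed.

Lemma S0 (K : numFieldType) (sg : K) n :
  \sum_(k < n.+1) cf sg (n - k) * df sg k = (n == 0)%:R.
Proof.
case: n => [|m]; first by rewrite big_ord1 /cf /df !expr0 divr1 mulr1.
set n := m.+1.
transitivity ((n`!)%:R^-1 * \sum_(k < n.+1) (- sg) ^+ (n - k) * sg ^+ k *+ 'C(n, k)).
  rewrite big_distrr /=; apply: eq_bigr => k _.
  have Hk : (k <= n)%N by rewrite -ltnS.
  have h1 := fact_neq0 K k; have h2 := fact_neq0 K (n - k).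
  have h3 : ('C(n, k))%:R != 0 :> K by rewrite pnatr_eq0 -lt0n bin_gt0.
  have E : (n`!)%:R = ('C(n,k))%:R * ((k`!)%:R * ((n-k)`!)%:R) :> K.
    by rewrite -(bin_fact Hk) !natrM.
  rewrite /cf /df -[_ *+ 'C(n, k)]mulr_natr E.
  set a := ('C(n,k))%:R; set b := (k`!)%:R; set c := ((n-k)`!)%:R.
  set X := (- sg) ^+ (n - k); set Y := sg ^+ k.
  by rewrite !invfM (@aux _ _ _ _ _ _ h3).
by rewrite -exprDn addNr expr0n /= mulr0.
Qed.
Arguments S0 {K}.

Lemma dfS (K : numFieldType) (sg : K) k : df sg k.+1 * (k.+1)%:R = sg * df sg k.
Proof.
rewrite /df factS natrM invfM exprS -!mulrA; congr (_ * _).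
congr (_ * _); rewrite mulrCA mulVf ?mulr1 //.
by rewrite pnatr_eq0.
Qed.

Lemma S1 (K : numFieldType) (sg : K) n :
  \sum_(k < n.+1) cf sg (n - k) * df sg k * k%:R = sg * (n == 1%N)%:R.
Proof.
case: n => [|m]; first by rewrite big_ord1 mulr0 /= mulr0.
rewrite big_ord_recl /= mulr0 add0r.
transitivity (sg * \sum_(k < m.+1) cf sg (m - k) * df sg k).
  rewrite big_distrr /=; apply: eq_bigr => k _.
  by rewrite /bump /= add1n subSS -mulrA dfS mulrCA.
by rewrite S0 eqSS.
Qed.
Arguments S1 {K}.

Lemma sum_delta0 (K : numFieldType) M (W : nat -> K) :
  \sum_(n < M.+1) ((n : nat) == 0%N)%:R * W n = W 0%N.
Proof. by rewrite big_ord_recl /= mul1r big1 ?addr0 // => i _; rewrite mul0r. Qed.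

Lemma sum_delta1 (K : numFieldType) M (W : nat -> K) :
  \sum_(n < M.+1) ((n : nat) == 1%N)%:R * W n = if M is 0 then 0 else W 1%N.
Proof.
case: M => [|M]; first by rewrite big_ord1 mul0r.
rewrite big_ord_recl /= mul0r add0r big_ord_recl /= mul1r big1 ?addr0 // => i _.
by rewrite mul0r.
Qed.

Lemma ccol1 (K : numFieldType) (sg : K) N (Z : nat -> nat -> nat -> K) :
  \sum_(j < N.+1) \sum_(i < (N - j).+1) \sum_(k < j.+1)
     (cf sg i * df sg k * Z (i + k)%N (N - j - i)%N (j - k)%N)
  = \sum_(q < N.+1) Z 0%N (N - q)%N q.
Proof.
rewrite (@tri3 K N (fun i k q p => cf sg i * df sg k * Z (i + k)%N p q)).
apply: eq_bigr => q _.
transitivity (\sum_(n < (N - q).+1) ((n : nat) == 0%N)%:R * Z n (N - q - n)%N q);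
  last by rewrite (@sum_delta0 K _ (fun n => Z n (N - q - n)%N q)) subn0.
apply: eq_bigr => n _; rewrite -(S0 sg n) big_distrl /=.
apply: eq_bigr => k _; rewrite subnK //; by rewrite -ltnS.
Qed.

Lemma ccolW (K : numFieldType) (sg : K) N (Z : nat -> nat -> nat -> K) :
  \sum_(j < N.+1) \sum_(i < (N - j).+1) \sum_(k < j.+1)
     (j%:R * (cf sg i * df sg k * Z (i + k)%N (N - j - i)%N (j - k)%N))
  = \sum_(q < N.+1) q%:R * Z 0%N (N - q)%N q
    + sg * \sum_(q < N) Z 1%N (N - q - 1)%N q.
Proof.
transitivity (\sum_(j < N.+1) \sum_(i < (N - j).+1) \sum_(k < j.+1)
  (fun i k q p => (q + k)%:R * (cf sg i * df sg k * Z (i + k)%N p q))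
     i k (j - k)%N (N - j - i)%N).
  apply: eq_bigr => j _; apply: eq_bigr => i _; apply: eq_bigr => k _ /=.
  by rewrite subnK // -ltnS.
rewrite (@tri3 K N (fun i k q p => (q + k)%:R * (cf sg i * df sg k * Z (i + k)%N p q))).
have -> : \sum_(q < N) Z 1%N (N - q - 1)%N q
  = \sum_(q < N.+1) (if (N - q)%N is 0 then 0 else Z 1%N (N - q - 1)%N q).
  rewrite big_ord_recr /= subnn addr0; apply: eq_bigr => q _.
  have : (0 < N - q)%N by rewrite subn_gt0.
  by case: (N - q)%N.
rewrite big_distrr -big_split /=; apply: eq_bigr => q _.
transitivity (\sum_(n < (N - q).+1)
   (q%:R * (((n : nat) == 0%N)%:R * Z n (N - q - n)%N q)
    + sg * (((n : nat) == 1%N)%:R * Z n (N - q - n)%N q))).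
  apply: eq_bigr => n _.
  rewrite mulrA mulrA -mulrDl -(S0 sg n) -(S1 sg n) big_distrr -big_split big_distrl /=.
  apply: eq_bigr => k _.
  have Hk : (k <= n)%N by rewrite -ltnS.
  rewrite subnK // natrD mulrDl [RHS]mulrDl; congr (_ + _); first by rewrite mulrA.
  by rewrite mulrA; congr (_ * _); rewrite mulrC.
rewrite big_split /= -!big_distrr /= (@sum_delta0 K _ (fun n => Z n (N - q - n)%N q))
  (@sum_delta1 K _ (fun n => Z n (N - q - n)%N q)) subn0.
by case: (N - q)%N => [|m] //; rewrite subn1.
Qed.
Arguments ccol1 {K}.
Arguments ccolW {K}.

Lemma expc_nil (K : numFieldType) (sg : K) : expc sg [::] [::] = 1.
Proof. by rewrite /expc !big_ord0 mulr1. Qed.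

Lemma expc_cons (K : numFieldType) (sg : K) i a j b :
  expc sg (i :: a) (j :: b) = cf sg i * df sg j * expc sg a b.
Proof. by rewrite /expc /= !big_ord_recl /= mulrACA. Qed.

Lemma collapse (K : numFieldType) (sg : K) e (X : mono -> mono -> mono -> K) :
  \sum_(b <- box e) \sum_(a1 <- box (subm e b)) \sum_(b1 <- box b)
     expc sg a1 b1 * X (addm a1 b1) (subm (subm e b) a1) (subm b b1)
  = \sum_(b <- box e) X (nseq (size e) 0%N) (subm e b) b.
Proof.
elim: e X => [|x e IH] X.
  by rewrite /= !big_seq1 expc_nil mul1r addm_nil_r.
rewrite [LHS]big_box_cons [RHS]big_box_cons.
pose Z := fun n p q => \sum_(b' <- box e) X (n :: nseq (size e) 0%N) (p :: subm e b') (q :: b').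
transitivity (\sum_(j < x.+1) \sum_(i < (x - j).+1) \sum_(k < j.+1)
   (cf sg i * df sg k * Z (i + k)%N (x - j - i)%N (j - k)%N)); last first.
  rewrite (ccol1 sg x Z); apply: eq_bigr => i _; apply: eq_bigr => b _.
  by rewrite subm_cons.
apply: eq_bigr => j _.
transitivity (\sum_(b' <- box e) \sum_(i < (x - j).+1) \sum_(a1 <- box (subm e b'))
   \sum_(k < j.+1) \sum_(b1 <- box b')
   (cf sg i * df sg k) * (expc sg a1 b1 *
     X ((i + k)%N :: addm a1 b1) ((x - j - i)%N :: subm (subm e b') a1)
       ((j - k)%N :: subm b' b1))).
  apply: eq_bigr => b' _; rewrite subm_cons big_box_cons; apply: eq_bigr => i _.
  apply: eq_bigr => a1 _; rewrite big_box_cons; apply: eq_bigr => k _.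
  apply: eq_bigr => b1 _.
  by rewrite expc_cons addm_cons !subm_cons mulrA.
rewrite exchange_big /=; apply: eq_bigr => i _.
under eq_bigr => b' _ do rewrite exchange_big /=.
rewrite exchange_big /=; apply: eq_bigr => k _.
rewrite /Z -(IH (fun f a b => X ((i + k)%N :: f) ((x - j - i)%N :: a) ((j - k)%N :: b))).
rewrite big_distrr; apply: eq_bigr => b' _.
rewrite big_distrr; apply: eq_bigr => a1 _.
by rewrite big_distrr.
Qed.
Arguments collapse {K}.

Lemma peel (K : numFieldType) (sg : K) N e (X : mono -> mono -> mono -> K) (j : nat) :
  \sum_(b' <- box e) \sum_(a1 <- box (subm (N :: e) (j :: b')))
     \sum_(b1 <- box (j :: b'))
       expc sg a1 b1 * X (addm a1 b1) (subm (subm (N :: e) (j :: b')) a1) (subm (j :: b') b1)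
  = \sum_(i < (N - j).+1) \sum_(k < j.+1) cf sg i * df sg k *
      \sum_(b' <- box e) X ((i + k)%N :: nseq (size e) 0%N) ((N - j - i)%N :: subm e b')
          ((j - k)%N :: b').
Proof.
transitivity (\sum_(b' <- box e) \sum_(i < (N - j).+1) \sum_(a1 <- box (subm e b'))
   \sum_(k < j.+1) \sum_(b1 <- box b')
   (cf sg i * df sg k) * (expc sg a1 b1 *
     X ((i + k)%N :: addm a1 b1) ((N - j - i)%N :: subm (subm e b') a1)
       ((j - k)%N :: subm b' b1))).
  apply: eq_bigr => b' _; rewrite subm_cons big_box_cons; apply: eq_bigr => i _.
  apply: eq_bigr => a1 _; rewrite big_box_cons; apply: eq_bigr => k _.
  apply: eq_bigr => b1 _.
  by rewrite expc_cons addm_cons !subm_cons mulrA.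
rewrite exchange_big /=; apply: eq_bigr => i _.
under eq_bigr => b' _ do rewrite exchange_big /=.
rewrite exchange_big /=; apply: eq_bigr => k _.
rewrite -(collapse sg e (fun f a b => X ((i + k)%N :: f) ((N - j - i)%N :: a) ((j - k)%N :: b))).
rewrite big_distrr; apply: eq_bigr => b' _.
rewrite big_distrr; apply: eq_bigr => a1 _.
by rewrite big_distrr.
Qed.

Lemma collapseW (K : numFieldType) (sg : K) x e (X : mono -> mono -> mono -> K) :
  \sum_(b <- box (x.+1 :: e)) (nth 0 b 0)%:R *
    (\sum_(a1 <- box (subm (x.+1 :: e) b)) \sum_(b1 <- box b)
     expc sg a1 b1 * X (addm a1 b1) (subm (subm (x.+1 :: e) b) a1) (subm b b1))
  = \sum_(b <- box (x.+1 :: e)) (nth 0 b 0)%:R * X (nseq (size e).+1 0%N) (subm (x.+1 :: e) b) b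
    + sg * \sum_(b <- box (x :: e)) X (1%N :: nseq (size e) 0%N) (subm (x :: e) b) b.
Proof.
rewrite [LHS]big_box_cons [X in _ = X + _]big_box_cons [X in _ = _ + _ * X]big_box_cons.
pose Z := fun n p q => \sum_(b' <- box e) X (n :: nseq (size e) 0%N) (p :: subm e b') (q :: b').
transitivity (\sum_(j < x.+2) \sum_(i < (x.+1 - j).+1) \sum_(k < j.+1)
   (j%:R * (cf sg i * df sg k * Z (i + k)%N (x.+1 - j - i)%N (j - k)%N))); last first.
  rewrite (ccolW sg x.+1 Z); congr (_ + _).
    apply: eq_bigr => q _; rewrite /Z big_distrr; apply: eq_bigr => b _.
    by rewrite subm_cons.
  congr (_ * _); apply: eq_bigr => q _; rewrite /Z; apply: eq_bigr => b _.
  by rewrite subm_cons subnAC subn1.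
apply: eq_bigr => j _.
under eq_bigr => b _ do rewrite (_ : nth 0%N ((j : nat) :: b) 0 = j) //.
rewrite -big_distrr peel [RHS](_ : _ = j%:R * \sum_(i < (x.+1 - j).+1) \sum_(k < j.+1)
   cf sg i * df sg k * Z (i + k)%N (x.+1 - j - i)%N (j - k)%N); first by [].
rewrite big_distrr; apply: eq_bigr => i _; rewrite big_distrr; by apply: eq_bigr.
Qed.
Arguments collapseW {K}.

Lemma resid_neg (K : numFieldType) (N : int) (f g : nat -> K) : N < 0 -> resid N f g = 0.
Proof. by case: N. Qed.

Lemma resid0 (K : numFieldType) (f g : nat -> K) : resid 0 f g = f 0%N * g 0%N.
Proof. by rewrite /resid /= big_ord1. Qed.

Lemma resid1 (K : numFieldType) (f g : nat -> K) :
  resid 1 f g = f 0%N * g 1%N + f 1%N * g 0%N.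
Proof. by rewrite /resid /= big_ord_recl big_ord1. Qed.

Lemma shT0 (K : numFieldType) (F : ps K) eps a c : shT F eps 0 a c = F a c.
Proof. by rewrite /shT wts0 big_seq1 addm_nil_r /shiftc big_ord0 mulr1. Qed.

Lemma shT1 (K : numFieldType) (F : ps K) eps a c :
  shT F eps 1 a c = F (incr_nth a 0) c * ((nth 0 a 0).+1%:R * eps).
Proof.
rewrite /shT wts1 big_seq1 addm_incr /shiftc big_ord1 /= addn1 bin1 divr1 expr1.
by [].
Qed.

Lemma shTb0 (K : numFieldType) (F : ps K) eps a c : shTb F eps 0 a c = F a c.
Proof. by rewrite /shTb wts0 big_seq1 addm_nil_r /shiftc big_ord0 mulr1. Qed.

Lemma shTb1 (K : numFieldType) (F : ps K) eps a c :
  shTb F eps 1 a c = F a (incr_nth c 0) * ((nth 0 c 0).+1%:R * eps).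
Proof.
rewrite /shTb wts1 big_seq1 addm_incr /shiftc big_ord1 /= addn1 bin1 divr1 expr1.
by [].
Qed.

Lemma RT (K : numFieldType) (p : int) (sg : K) (F G : ps K) a b g :
  \sum_(d <- box g) rhsTerm p sg F G a b (subm g d) d
  = \sum_(d <- box g) resid (- p - 1) (fun k => shTb F (- sg) k b d)
        (fun l => shTb G sg l a (subm g d)).
Proof.
rewrite /rhsTerm.
pose X := fun f c2 d2 => resid ((wt f)%:Z - p - 1) (fun k => shTb F (- sg) k b d2)
        (fun l => shTb G sg l a c2).
transitivity (\sum_(d <- box g) \sum_(c1 <- box (subm g d)) \sum_(d1 <- box d)
   expc sg c1 d1 * X (addm c1 d1) (subm (subm g d) c1) (subm d d1)).
  apply: eq_bigr => d _; apply: eq_bigr => c1 _; apply: eq_bigr => d1 _.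
  by rewrite /X wt_addm.
rewrite collapse; apply: eq_bigr => d _; by rewrite /X wt_zeros sub0r.
Qed.

Lemma LT (K : numFieldType) (m : int) (sg : K) (F G : ps K) e c d :
  \sum_(b <- box e) lhsTerm m sg F G (subm e b) b c d
  = \sum_(b <- box e) resid (m + 1) (fun k => shT F (- sg) k b d)
        (fun l => shT G sg l (subm e b) c).
Proof.
rewrite /lhsTerm.
pose X := fun f a2 b2 => resid (m + (wt f)%:Z + 1) (fun k => shT F (- sg) k b2 d)
        (fun l => shT G sg l a2 c).
transitivity (\sum_(b <- box e) \sum_(a1 <- box (subm e b)) \sum_(b1 <- box b)
   expc sg a1 b1 * X (addm a1 b1) (subm (subm e b) a1) (subm b b1)).
  apply: eq_bigr => b _; apply: eq_bigr => a1 _; apply: eq_bigr => b1 _.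
  by rewrite /X wt_addm.
rewrite collapse; apply: eq_bigr => b _; by rewrite /X wt_zeros addr0.
Qed.

Lemma LTW (K : numFieldType) (m : int) (sg : K) (F G : ps K) x e c d :
  \sum_(b <- box (x.+1 :: e)) (nth 0 b 0)%:R * lhsTerm m sg F G (subm (x.+1 :: e) b) b c d
  = \sum_(b <- box (x.+1 :: e)) (nth 0 b 0)%:R * resid (m + 1) (fun k => shT F (- sg) k b d)
        (fun l => shT G sg l (subm (x.+1 :: e) b) c)
    + sg * \sum_(b <- box (x :: e)) resid (m + 1 + 1) (fun k => shT F (- sg) k b d)
        (fun l => shT G sg l (subm (x :: e) b) c).
Proof.
rewrite /lhsTerm.
pose X := fun f a2 b2 => resid (m + (wt f)%:Z + 1) (fun k => shT F (- sg) k b2 d)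
        (fun l => shT G sg l a2 c).
transitivity (\sum_(b <- box (x.+1 :: e)) (nth 0 b 0)%:R *
   (\sum_(a1 <- box (subm (x.+1 :: e) b)) \sum_(b1 <- box b)
   expc sg a1 b1 * X (addm a1 b1) (subm (subm (x.+1 :: e) b) a1) (subm b b1))).
  apply: eq_bigr => b _; congr (_ * _); apply: eq_bigr => a1 _; apply: eq_bigr => b1 _.
  by rewrite /X wt_addm.
rewrite collapseW; congr (_ + _).
  by apply: eq_bigr => b _; rewrite /X wt_zeros addr0.
congr (_ * _); apply: eq_bigr => b _; rewrite /X wt_unit.
by [].
Qed.

Lemma box_swap (K : numFieldType) a (h : mono -> mono -> K) :
  \sum_(a1 <- box a) h a1 (subm a a1) = \sum_(a1 <- box a) h (subm a a1) a1.
Proof.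
elim: a h => [|x a IH] h; first by rewrite /= !big_seq1.
rewrite !big_box_cons.
transitivity (\sum_(i < x.+1) (fun i j => \sum_(b <- box a) h (i :: b) (j :: subm a b)) i (x - i)%N).
  by apply: eq_bigr => i _; apply: eq_bigr => b _; rewrite subm_cons.
rewrite (@rev2 K x (fun i j => \sum_(b <- box a) h (i :: b) (j :: subm a b))).
apply: eq_bigr => q _.
rewrite (IH (fun u v => h ((x - q)%N :: u) ((q : nat) :: v))).
by apply: eq_bigr => b _; rewrite subm_cons.
Qed.

Lemma mulpsC (K : numFieldType) (F G : ps K) a c : mulps F G a c = mulps G F a c.
Proof.
rewrite /mulps (@box_swap K a (fun u v => \sum_(c1 <- box c) F u c1 * G v (subm c c1))) /=.
apply: eq_bigr => a1 _.
rewrite (@box_swap K c (fun u v => F (subm a a1) u * G a1 v)) /=.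
by apply: eq_bigr => c1 _; rewrite mulrC.
Qed.

Lemma head_shift (K : numFieldType) x e (W : mono -> mono -> K) :
  \sum_(b <- box (x.+1 :: e)) (nth 0 b 0)%:R * W b (subm (x.+1 :: e) b)
  = \sum_(b <- box (x :: e)) (nth 0 b 0).+1%:R * W (incr_nth b 0) (subm (x :: e) b).
Proof.
rewrite !big_box_cons big_ord_recl /= big1 ?add0r; last by move=> b _; rewrite mul0r.
apply: eq_bigr => i _; apply: eq_bigr => b _.
by rewrite !subm_cons.
Qed.

Lemma DL (K : numFieldType) (m : int) (sg : K) (F G : ps K) e g :
  \sum_(b <- box e) \sum_(d <- box g) lhsTerm m sg F G (subm e b) b (subm g d) d
  = \sum_(b <- box e) \sum_(d <- box g) resid (m + 1) (fun k => shT F (- sg) k b d)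
        (fun l => shT G sg l (subm e b) (subm g d)).
Proof.
rewrite exchange_big [RHS]exchange_big /=; apply: eq_bigr => d _.
by rewrite LT.
Qed.

Lemma DR (K : numFieldType) (p : int) (sg : K) (F G : ps K) e g :
  \sum_(b <- box e) \sum_(d <- box g) rhsTerm p sg F G (subm e b) b (subm g d) d
  = \sum_(b <- box e) \sum_(d <- box g) resid (- p - 1) (fun k => shTb F (- sg) k b d)
        (fun l => shTb G sg l (subm e b) (subm g d)).
Proof. by apply: eq_bigr => b _; rewrite RT. Qed.

Lemma DRW (K : numFieldType) (p : int) (sg : K) (F G : ps K) e g :
  \sum_(b <- box e) (nth 0 b 0)%:R * \sum_(d <- box g) rhsTerm p sg F G (subm e b) b (subm g d) d
  = \sum_(b <- box e) (nth 0 b 0)%:R * \sum_(d <- box g) resid (- p - 1) (fun k => shTb F (- sg) k b d)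
        (fun l => shTb G sg l (subm e b) (subm g d)).
Proof. by apply: eq_bigr => b _; rewrite RT. Qed.

Lemma DLW (K : numFieldType) (m : int) (sg : K) (F G : ps K) x e g :
  \sum_(b <- box (x.+1 :: e)) (nth 0 b 0)%:R *
     \sum_(d <- box g) lhsTerm m sg F G (subm (x.+1 :: e) b) b (subm g d) d
  = \sum_(b <- box (x.+1 :: e)) (nth 0 b 0)%:R * \sum_(d <- box g)
       resid (m + 1) (fun k => shT F (- sg) k b d)
        (fun l => shT G sg l (subm (x.+1 :: e) b) (subm g d))
    + sg * \sum_(b <- box (x :: e)) \sum_(d <- box g) resid (m + 1 + 1)
        (fun k => shT F (- sg) k b d) (fun l => shT G sg l (subm (x :: e) b) (subm g d)).
Proof.
under eq_bigr => b _ do rewrite big_distrr.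
under [in RHS]eq_bigr => b _ do rewrite big_distrr.
rewrite exchange_big [X in _ = X + _]exchange_big [X in _ = _ + _ * X]exchange_big /=.
rewrite big_distrr -big_split /=; apply: eq_bigr => d _.
by rewrite LTW.
Qed.

Lemma HL1 (K : numFieldType) (F G : ps K) e g :
  \sum_(b <- box e) \sum_(d <- box g) resid 1 (fun k => shT F (- 1) k b d)
        (fun l => shT G 1 l (subm e b) (subm g d))
  = - hirota1 (@dT1 K) F G e g.
Proof.
rewrite /hirota1 /mulps opprB -sumrB; apply: eq_bigr => b _; rewrite -sumrB.
apply: eq_bigr => d _.
rewrite resid1 !shT0 !shT1 /dT1; congr (_ + _).
  by rewrite mulr1 (mulrC (G _ _)).
by rewrite mulrN1 mulrN mulNr (mulrC (F _ _)).
Qed.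

Lemma HR1 (K : numFieldType) (F G : ps K) e g :
  \sum_(b <- box e) \sum_(d <- box g) resid 1 (fun k => shTb F (- 1) k b d)
        (fun l => shTb G 1 l (subm e b) (subm g d))
  = - hirota1 (@dTb1 K) F G e g.
Proof.
rewrite /hirota1 /mulps opprB -sumrB; apply: eq_bigr => b _; rewrite -sumrB.
apply: eq_bigr => d _.
rewrite resid1 !shTb0 !shTb1 /dTb1; congr (_ + _).
  by rewrite mulr1 (mulrC (G _ _)).
by rewrite mulrN1 mulrN mulNr (mulrC (F _ _)).
Qed.

Lemma l4 (x y z w : int) : x + y - z - w = (x - z) + (y - w).
Proof. by rewrite -addrA addrACA. Qed.
Lemma l5 (x y z w : int) : x - y - z + w = (x - z) + (w - y).
Proof. by rewrite -addrA addrACA (addrC (- y)). Qed.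
Lemma k1 (s : int) : s - (s + 1) = -1.
Proof. by rewrite opprD addrA subrr add0r. Qed.
Lemma k2 (s : int) : s - (s - 1) = 1.
Proof. by rewrite opprB addrC subrK. Qed.
Lemma k3 (s : int) : s + 1 - s = 1.
Proof. by rewrite addrAC subrr add0r. Qed.
Lemma k4 (s : int) : s - 1 - s = -1.
Proof. by rewrite addrAC subrr add0r. Qed.
Lemma k6 (s : int) : s - 1 - (s + 1) = -2.
Proof. by rewrite opprD addrA k4. Qed.
Lemma k7 (s : int) : s + 1 - (s - 1) = 2.
Proof. by rewrite opprB addrA (addrAC (s + 1)) k3. Qed.

Lemma sum2_neg (K : numFieldType) (N : int) (s1 s2 : seq mono)
  (f g : mono -> mono -> nat -> K) : N < 0 ->
  \sum_(b <- s1) \sum_(d <- s2) resid N (f b d) (g b d) = 0.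
Proof. by move=> HN; rewrite big1 // => b _; rewrite big1 // => d _; rewrite resid_neg. Qed.

Lemma sum2w_neg (K : numFieldType) (N : int) (s1 s2 : seq mono) (w : mono -> K)
  (f g : mono -> mono -> nat -> K) : N < 0 ->
  \sum_(b <- s1) w b * \sum_(d <- s2) resid N (f b d) (g b d) = 0.
Proof. by move=> HN; rewrite big1 // => b _; rewrite big1 ?mulr0 // => d _; rewrite resid_neg. Qed.

Lemma eq2 (K : numFieldType) (T : int -> int -> (nat -> nat) -> (nat -> nat) -> K) :
  PT_bilinear T -> forall (s r : int) (a c : mono),
       hirota1 (@dT1 K) (tps T s r) (tps T (s + 1) (r - 1)) a c
       + hirota1 (@dTb1 K) (tps T s (r - 1)) (tps T (s + 1) r) a c = 0.
Proof.
move=> H s r a c.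
have S : \sum_(b <- box a) \sum_(d <- box c)
  lhsTerm (s + r - (s + 1) - (r - 1)) 1 (tps T s r) (tps T (s + 1) (r - 1)) (subm a b) b (subm c d) d
   + \sum_(b <- box a) \sum_(d <- box c) lhsTerm (s + 1 + (r - 1) - s - r - 4) (-1) (tps T (s + 1) (r + 1))
        (tps T (s + 1 - 1) (r - 1 - 1)) (subm a b) b (subm c d) d
  = \sum_(b <- box a) \sum_(d <- box c)
  rhsTerm (s - r - (s + 1) + (r - 1)) 1 (tps T (s + 1) r) (tps T (s + 1 - 1) (r - 1))
      (subm a b) b (subm c d) d
   + \sum_(b <- box a) \sum_(d <- box c) rhsTerm (s + 1 - (r - 1) - s + r) (-1) (tps T s (r + 1)) (tps T (s + 1) (r - 1 - 1))
      (subm a b) b (subm c d) d.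
  rewrite -big_split -[in RHS]big_split /=; apply: eq_bigr => b _.
  rewrite -big_split -[in RHS]big_split /=; apply: eq_bigr => d _.
  exact: H.
rewrite DL DL DR DR in S.
have e1 : s + r - (s + 1) - (r - 1) + 1 = 1 by rewrite l4 k1 k2.
have e2 : s + 1 + (r - 1) - s - r - 4 + 1 < 0 by rewrite l4 k3 k4.
have e3 : - (s - r - (s + 1) + (r - 1)) - 1 = 1 by rewrite l5 k1 k4.
have e4 : - (s + 1 - (r - 1) - s + r) - 1 < 0 by rewrite l5 k3 k2.
rewrite e1 e3 (sum2_neg _ _ _ _ _ _ e2) (sum2_neg _ _ _ _ _ _ e4) !addr0 addrK HL1 HR1 in S.
move/eqP: S.
rewrite eqr_opp => /eqP ->.
rewrite /hirota1 (@mulpsC K (dTb1 (tps T s (r - 1)))) (@mulpsC K (tps T s (r - 1))).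
by rewrite -[X in _ + X]opprB subrr.
Qed.

Lemma HM0 (K : numFieldType) (sg : K) (F G : ps K) e g :
  \sum_(b <- box e) \sum_(d <- box g) resid (0%N%:Z) (fun k => shT F (- sg) k b d)
        (fun l => shT G sg l (subm e b) (subm g d)) = mulps F G e g.
Proof.
rewrite /mulps; apply: eq_bigr => b _; apply: eq_bigr => d _.
by rewrite resid0 !shT0.
Qed.

Lemma HR2 (K : numFieldType) (f : ps K) e g :
  \sum_(b <- box e) (nth 0 b 0).+1%:R * \sum_(d <- box g) resid 1
     (fun k => shTb f (- 1) k (incr_nth b 0) d) (fun l => shTb f 1 l (subm e b) (subm g d))
  = mulps (@dT1 K f) (@dTb1 K f) e g - mulps (@dT1 K (@dTb1 K f)) f e g.
Proof.
rewrite /mulps -sumrB; apply: eq_bigr => b _; rewrite -sumrB mulr_sumr.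
apply: eq_bigr => d _; rewrite resid1 !shTb0 !shTb1 /dT1 /dTb1 mulrDr; congr (_ + _).
  by rewrite mulr1 mulrA (mulrC (f _ (incr_nth _ _))).
rewrite mulrN1 mulrN mulNr mulrN !mulrA (mulrC (_ * f _ _)) !mulrA.
by rewrite (mulrC ((nth 0 d 0).+1%:R)).

Qed.

Lemma eq1_cons (K : numFieldType) (T : int -> int -> (nat -> nat) -> (nat -> nat) -> K) :
  PT_bilinear T -> forall (s r : int) x e (c : mono),
       2^-1 * hirota2 (@dT1 K) (@dTb1 K) (tps T s r) (tps T s r) (x :: e) c
       + mulps (tps T (s - 1) r) (tps T (s + 1) r) (x :: e) c
       - mulps (tps T s (r - 1)) (tps T s (r + 1)) (x :: e) c = 0.
Proof.
move=> H s r x e g.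
set E := x.+1 :: e.
have S : \sum_(b <- box E) (nth 0 b 0)%:R * \sum_(d <- box g)
  lhsTerm (s - 1 + r - (s + 1) - r) 1 (tps T (s - 1) r) (tps T (s + 1) r) (subm E b) b (subm g d) d
   + \sum_(b <- box E) (nth 0 b 0)%:R * \sum_(d <- box g)
  lhsTerm (s + 1 + r - (s - 1) - r - 4) (-1) (tps T (s - 1 + 1) (r + 1))
        (tps T (s + 1 - 1) (r - 1)) (subm E b) b (subm g d) d
  = \sum_(b <- box E) (nth 0 b 0)%:R * \sum_(d <- box g)
  rhsTerm (s - 1 - r - (s + 1) + r) 1 (tps T (s - 1 + 1) r) (tps T (s + 1 - 1) r)
      (subm E b) b (subm g d) d
   + \sum_(b <- box E) (nth 0 b 0)%:R * \sum_(d <- box g)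
  rhsTerm (s + 1 - r - (s - 1) + r) (-1) (tps T (s - 1) (r + 1)) (tps T (s + 1) (r - 1))
      (subm E b) b (subm g d) d.
  rewrite -big_split -[in RHS]big_split /=; apply: eq_bigr => b _.
  rewrite -!mulrDr -big_split -[in RHS]big_split /=; congr (_ * _); apply: eq_bigr => d _.
  exact: H.
rewrite /E DLW DLW DRW DRW in S.
have f1 : s - 1 + r - (s + 1) - r + 1 < 0 by rewrite l4 k6 subrr.
have f2 : s - 1 + r - (s + 1) - r + 1 + 1 = 0%N%:Z by rewrite l4 k6 subrr.
have f3 : s + 1 + r - (s - 1) - r - 4 + 1 < 0 by rewrite l4 k7 subrr.
have f4 : s + 1 + r - (s - 1) - r - 4 + 1 + 1 = 0%N%:Z by rewrite l4 k7 subrr.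
have f5 : - (s - 1 - r - (s + 1) + r) - 1 = 1 by rewrite l5 k6 subrr.
have f6 : - (s + 1 - r - (s - 1) + r) - 1 < 0 by rewrite l5 k7 subrr.
rewrite f2 f4 f5 (sum2w_neg _ _ _ _ _ _ _ f1) (sum2w_neg _ _ _ _ _ _ _ f3)
  (sum2w_neg _ _ _ _ _ _ _ f6) !HM0 !add0r addr0 subrK addrK mul1r mulN1r in S.
rewrite (@head_shift K x e (fun b a => \sum_(d <- box g) resid 1
     (fun k => shTb (tps T s r) (- 1) k b d) (fun l => shTb (tps T s r) 1 l a (subm g d)))) in S.
rewrite HR2 in S.
rewrite (@mulpsC K (tps T s (r - 1))) -addrA S /hirota2.
rewrite (@mulpsC K (dTb1 (tps T s r)) (dT1 (tps T s r))).
rewrite (@mulpsC K (tps T s r) (dT1 (dTb1 (tps T s r)))).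
set P := mulps (dT1 (dTb1 (tps T s r))) (tps T s r) (x :: e) g.
set Q := mulps (dT1 (tps T s r)) (dTb1 (tps T s r)) (x :: e) g.
have -> : P - Q - Q + P = 2%:R * (P - Q) by rewrite mulr_natl mulr2n addrA addrAC.
rewrite mulrA mulVf ?pnatr_eq0 // mul1r.
by rewrite -[Q - P]opprB subrr.
Qed.

Definition good0 (K : numFieldType) (X : ps K) := forall c, X [::] c = X [:: 0%N] c.
Arguments good0 {K}.

Lemma good_tps (K : numFieldType) (T : int -> int -> (nat -> nat) -> (nat -> nat) -> K) s r :
  good0 (tps T s r).
Proof.
move=> c; rewrite /tps; congr (T s r _ _); apply: functional_extensionality => i.
by rewrite nth_nil; case: i => [|[|i]].
Qed.

Lemma good_dT1 (K : numFieldType) (X : ps K) : good0 (@dT1 K X).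
Proof. by []. Qed.

Lemma good_dTb1 (K : numFieldType) (X : ps K) : good0 X -> good0 (@dTb1 K X).
Proof. by move=> HX c; rewrite /dTb1 HX. Qed.

Lemma mulps_nil0 (K : numFieldType) (X Y : ps K) c :
  good0 X -> good0 Y -> mulps X Y [::] c = mulps X Y [:: 0%N] c.
Proof.
move=> HX HY; rewrite /mulps /= !big_seq1; apply: eq_bigr => c1 _.
by rewrite HX HY.
Qed.

Theorem mainTheorem14 (K : numFieldType)
  (T : int -> int -> (nat -> nat) -> (nat -> nat) -> K) :
  PT_tau T ->
  forall s r : int,
    (forall a c : mono,
       2^-1 * hirota2 (@dT1 K) (@dTb1 K) (tps T s r) (tps T s r) a c
       + mulps (tps T (s - 1) r) (tps T (s + 1) r) a c
       - mulps (tps T s (r - 1)) (tps T s (r + 1)) a c = 0)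
    /\
    (forall a c : mono,
       hirota1 (@dT1 K) (tps T s r) (tps T (s + 1) (r - 1)) a c
       + hirota1 (@dTb1 K) (tps T s (r - 1)) (tps T (s + 1) r) a c = 0).
Proof.
move=> [_ H] s r; split; last by move=> a c; exact: eq2.
move=> a c; case: a => [|x e]; last exact: eq1_cons.
have g1 := @good_tps K T s r.
rewrite /hirota2 !mulps_nil0 //; try (apply: good_dTb1; done); try done;
  try exact: good_tps.
exact: (@eq1_cons K T H s r 0 [::] c).
Qed.
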